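(* Fix $I\in\mathbb{N}$. For $\rho \in [0,1]^I$ satisfying $\sum_{i=1}^I 2i \rho_i <1$, the $I\times I$ matrix $M=M(\rho)$ with entries $M_{ii}(\rho)=1-\sum_{j \neq i} 2(i \wedge j) \rho_j$ and $M_{ij}(\rho)=2(i\wedge j)\rho_j$ for $i\neq j$ is invertible. *)

(* Defs.v *)
From mathcomp Require Import all_boot all_order all_algebra.
Set Implicit Arguments. Unset Strict Implicit. Unset Printing Implicit Defensive.
Import Order.TTheory GRing.Theory Num.Theory.
Local Open Scope ring_scope.

(* Indices 1..I are represented by i : 'I_I with value i.+1. *)
Definition Mrho (R : realFieldType) (I : nat) (rho : 'I_I -> R) : 'M[R]_I :=
  \matrix_(i < I, j < I)
    if i == j then
      1 - \sum_(k < I | k != i) 2 * (minn i.+1 k.+1)%:R * rho k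
    else 2 * (minn i.+1 j.+1)%:R * rho j.

(* Main.v *)
Require Import Defs.
From mathcomp Require Import all_boot all_order all_algebra.
From mathcomp Require Import ring lra.
Import Order.TTheory GRing.Theory Num.Theory.
Local Open Scope ring_scope.

Lemma sum_le_nat (I m : nat) : (m < I)%N -> (\sum_(l < I) (l <= m)%N = m.+1)%N.
Proof.
move=> hm.
rewrite -(big_mkord xpredT (fun l => nat_of_bool (l <= m)%N)).
rewrite (@big_cat_nat _ _ _ m.+1) //=.
rewrite (@eq_big_nat _ _ _ 0 m.+1 _ (fun _ => 1%N)); last first.
  by move=> l /andP[_ hl]; rewrite ltnS in hl; rewrite hl.
rewrite sum_nat_const_nat subn0 muln1.
rewrite (@eq_big_nat _ _ _ m.+1 I _ (fun _ => 0%N)); last first.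
  by move=> l /andP[hl _]; rewrite leqNgt hl.
by rewrite sum_nat_const_nat muln0 addn0.
Qed.

Lemma minE (R : realFieldType) (I : nat) (i j : 'I_I) :
  (minn i.+1 j.+1)%:R = \sum_(l < I) (((l <= i)%N && (l <= j)%N) %:R : R).
Proof.
rewrite -natr_sum; congr (_%:R).
rewrite minnSS -(@sum_le_nat I (minn i j)); last first.
  by rewrite gtn_min ltn_ord.
by apply: eq_bigr => l _; rewrite leq_min.
Qed.

Lemma psd (R : realFieldType) (I : nat) (y : 'I_I -> R) :
  0 <= \sum_(i < I) \sum_(j < I) (minn i.+1 j.+1)%:R * (y i * y j).
Proof.
have -> : \sum_(i < I) \sum_(j < I) (minn i.+1 j.+1)%:R * (y i * y j)
   = \sum_(l < I) (\sum_(i < I) ((l <= i)%N%:R * y i)) ^+ 2.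
  under eq_bigr => i _ do (under eq_bigr => j _ do rewrite minE mulr_suml;
     rewrite exchange_big /=).
  rewrite exchange_big /=; apply: eq_bigr => l _.
  rewrite expr2 big_distrl /=; apply: eq_bigr => i _.
  rewrite big_distrr /=; apply: eq_bigr => j _.
  by case: (l <= i)%N; case: (l <= j)%N => /=;
    rewrite ?mul0r ?mulr0 ?mul1r ?mulr1 ?mulrA.
by apply: sumr_ge0 => l _; apply: sqr_ge0.
Qed.

Theorem lemma5p1 (R : realFieldType) (I : nat) (rho : 'I_I -> R)
  (hrho : forall i, 0 <= rho i <= 1)
  (hsum : \sum_(i < I) 2 * (i.+1)%:R * rho i < 1) :
  Mrho rho \in unitmx.
Proof.
set c := fun i : 'I_I => \sum_(k < I) 2 * (minn i.+1 k.+1)%:R * rho k.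
have hc : forall i, c i < 1.
  move=> i; apply: le_lt_trans hsum; apply: ler_sum => k _.
  have /andP[h0 _] := hrho k.
  apply: ler_wpM2r => //; apply: ler_wpM2l => //; rewrite ler_nat geq_minr //.
have hM : forall i j, Mrho rho i j =
    (i == j)%:R * (1 - c i) + 2 * (minn i.+1 j.+1)%:R * rho j.
  move=> i j; rewrite mxE; case: eqP => [<-|_]; last by rewrite mul0r add0r.
  by rewrite /c [in RHS](bigD1 i) //=; ring.
rewrite -unitmx_tr unitmxE unitfE; apply/negP => /det0P [v hv0 hv].
have hv' : forall i, \sum_(j < I) Mrho rho i j * v 0 j = 0.
  move=> i; have := congr1 (fun A : 'rV[R]_I => A 0 i) hv; rewrite !mxE => h.
  rewrite -[RHS]h; apply: eq_bigr => j _; by rewrite !mxE mulrC.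
have eq0 : forall i, (1 - c i) * v 0 i
    + \sum_(j < I) 2 * (minn i.+1 j.+1)%:R * rho j * v 0 j = 0.
  move=> i; rewrite -[RHS](hv' i).
  under [in RHS]eq_bigr => j _ do rewrite hM mulrDl.
  rewrite big_split /=.
  have -> : \sum_(k < I) (i == k)%:R * (1 - c i) * v 0 k = (1 - c i) * v 0 i.
    rewrite (bigD1 i) //= big1 ?addr0 ?eqxx ?mul1r //.
    by move=> j hj; rewrite eq_sym (negbTE hj) !mul0r.
  by [].
pose y := fun i => rho i * v 0 i.
have key : \sum_(i < I) rho i * (1 - c i) * v 0 i ^+ 2
    + 2 * \sum_(i < I) \sum_(j < I) (minn i.+1 j.+1)%:R * (y i * y j) = 0.
  rewrite mulr_sumr -big_split /=; apply: big1 => i _.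
  transitivity (y i * ((1 - c i) * v 0 i
    + \sum_(j < I) 2 * (minn i.+1 j.+1)%:R * rho j * v 0 j));
    last by rewrite eq0 mulr0.
  rewrite [RHS]mulrDr [in RHS]mulr_sumr; congr (_ + _); first by rewrite /y; ring.
  rewrite mulr_sumr; by apply: eq_bigr => j _; rewrite /y; ring.
have t1 : forall i, 0 <= rho i * (1 - c i) * v 0 i ^+ 2.
  move=> i; have /andP[h0 _] := hrho i.
  by rewrite mulr_ge0 ?sqr_ge0 // mulr_ge0 // subr_ge0 ltW.
have s1 : 0 <= \sum_(i < I) rho i * (1 - c i) * v 0 i ^+ 2.
  by apply: sumr_ge0 => i _; apply: t1.
have s2 : 0 <= 2 * \sum_(i < I) \sum_(j < I) (minn i.+1 j.+1)%:R * (y i * y j).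
  by rewrite mulr_ge0 // psd.
have /eqP := key; rewrite paddr_eq0 // => /andP[/eqP e1 _].
have hy : forall i, y i = 0.
  move=> i; have := psumr_eq0P (fun k _ => t1 k) e1 (i := i) isT.
  move=> /eqP; rewrite !mulf_eq0 subr_eq0 => /orP[/orP[/eqP h0|]|].
  - by rewrite /y h0 mul0r.
  - by move=> /eqP h; have := hc i; rewrite -h ltxx.
  - by move=> /orP[] /eqP h0; rewrite /y h0 mulr0.
apply/negP: hv0; apply/negPn/eqP/rowP => i; rewrite mxE.
have := eq0 i.
under eq_bigr => j _ do rewrite -mulrA -/(y j) hy mulr0.
rewrite big1 // addr0 => /eqP; rewrite mulf_eq0 subr_eq0 => /orP[/eqP h|/eqP //].
by have := hc i; rewrite -h ltxx.
Qed.
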